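(* Let $G$ be a simple, undirected, connected graph on $N>2$ vertices with edge set $E$ and degree sequence $d_1\le d_2\le\cdots\le d_N$. Then $$R^+(G)\ge N(N-2)+2|E|\sum_{j=1}^N\frac{1}{d_j}-\frac{4|E|}{1+d_1}.$$
   Context: For vertices $i,j$ of $G$, $R_{ij}$ denotes the effective resistance between $i$ and $j$ when every edge of $G$ is a unit resistor. The additive degree-Kirchhoff index is $R^+(G)=\sum_{i<j}(d_i+d_j)R_{ij}$, where $d_i$ is the degree of vertex $i$. *)

(* Defs.v *)
From HB Require Import structures.
From mathcomp Require Import all_boot all_order all_algebra.
Set Implicit Arguments. Unset Strict Implicit. Unset Printing Implicit Defensive.
Import Order.TTheory GRing.Theory Num.Theory.
Local Open Scope ring_scope.

Definition simple_graph (N : nat) (e : rel 'I_N) : Prop :=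
  symmetric e /\ irreflexive e.

Definition connected_graph (N : nat) (e : rel 'I_N) : Prop :=
  forall i j : 'I_N, connect e i j.

Definition deg (N : nat) (e : rel 'I_N) (i : 'I_N) : nat := #|[set j | e i j]|.

(* minimum degree d_1 (N is used as the neutral element; for N > 0 the
   minimum over all vertices is attained) *)
Definition mindeg (N : nat) (e : rel 'I_N) : nat :=
  \big[minn/N]_(i : 'I_N) deg e i.

Definition nedges (N : nat) (e : rel 'I_N) : nat :=
  #|[set p : 'I_N * 'I_N | (p.1 < p.2)%N && e p.1 p.2]|.

Definition laplacian (R : pzRingType) (N : nat) (e : rel 'I_N) : 'M[R]_N :=
  \matrix_(i, j) (if i == j then (deg e i)%:R else if e i j then -1 else 0).

(* Effective resistance with unit resistors (Kirchhoff): inject a unit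
   current at i and extract it at j; the node potentials x solve
   x L = e_i - e_j (L symmetric), and R_ij = x_i - x_j.  pinvmx picks a
   solution whenever one exists (always the case for connected graphs). *)
Definition eff_res (R : fieldType) (N : nat) (e : rel 'I_N) (i j : 'I_N) : R :=
  let b : 'rV[R]_N := delta_mx 0 i - delta_mx 0 j in
  let x := b *m pinvmx (laplacian R e) in
  x 0 i - x 0 j.

Definition add_deg_kirchhoff (R : fieldType) (N : nat) (e : rel 'I_N) : R :=
  \sum_(i : 'I_N) \sum_(j : 'I_N | (i < j)%N)
     ((deg e i + deg e j)%:R * eff_res R e i j).

(* Main.v *)
Require Import Defs.
From HB Require Import structures.
From mathcomp Require Import all_boot all_order all_algebra.
From mathcomp Require Import ring lra zify.
Import Order.TTheory GRing.Theory Num.Theory.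
Local Open Scope ring_scope.

Section Pf.
Variable R : realFieldType.
Variable N : nat.
Variable e : rel 'I_N.
Hypothesis esym : symmetric e.
Hypothesis eirr : irreflexive e.

Local Notation L := (laplacian R e).
Local Notation d i := ((deg e i)%:R : R).

Lemma degE i : d i = \sum_c (e i c)%:R.
Proof.
rewrite /deg -sum1_card natr_sum big_mkcond /=; apply: eq_bigr => c _.
by rewrite inE; case: (e i c).
Qed.

Lemma Lentry a c : L a c = (a == c)%:R * d a - (e a c)%:R.
Proof.
rewrite mxE; case: eqP => [->|_]; first by rewrite eirr mul1r subr0.
rewrite /= mul0r sub0r. case: (e a c) => /=. by []. by rewrite oppr0.
Qed.

Lemma Lsym : L^T = L.
Proof.
apply/matrixP => a c; rewrite !mxE.
have [->|ac] := eqVneq a c; first by rewrite ?eqxx.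
by rewrite esym.
Qed.

Lemma Qid (u : 'I_N -> R) :
  2 * \sum_a \sum_c u a * L a c * u c
  = \sum_a \sum_c (e a c)%:R * (u a - u c) ^+ 2.
Proof.
have h1 : \sum_a \sum_c u a * L a c * u c
   = \sum_a \sum_c (e a c)%:R * u a ^+ 2 - \sum_a \sum_c (e a c)%:R * (u a * u c).
  rewrite -sumrB; apply: eq_bigr => a _.
  rewrite -sumrB.
  transitivity (u a * d a * u a - \sum_c (e a c)%:R * (u a * u c)).
    rewrite (bigD1 a) //= [X in _ = _ - X](bigD1 a) //= eirr mul0r add0r.
    rewrite Lentry eqxx eirr mul1r subr0; congr (_ + _).
    rewrite -sumrN; apply: eq_bigr => c /negbTE ca.
    by rewrite Lentry eq_sym ca mul0r sub0r; ring.
  rewrite degE mulr_sumr mulr_suml -sumrB; apply: eq_bigr => c _; ring.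
have h3 : \sum_a \sum_c (e a c)%:R * u c ^+ 2 = \sum_a \sum_c (e a c)%:R * u a ^+ 2.
  rewrite exchange_big /=; apply: eq_bigr => a _; apply: eq_bigr => c _.
  by rewrite esym.
transitivity (\sum_a \sum_c ((e a c)%:R * u a ^+ 2 + (e a c)%:R * u c ^+ 2
    - 2 * ((e a c)%:R * (u a * u c)))); last first.
  by apply: eq_bigr => a _; apply: eq_bigr => c _; ring.
rewrite !pair_big /= sumrB big_split -mulr_sumr /=.
rewrite !pair_big /= in h1 h3.
rewrite h1 h3; ring.
Qed.

Lemma Qge0 (u : 'I_N -> R) : 0 <= \sum_a \sum_c u a * L a c * u c.
Proof.
have : 0 <= 2 * \sum_a \sum_c u a * L a c * u c.
  rewrite Qid; apply: sumr_ge0 => a _; apply: sumr_ge0 => c _.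
  by rewrite mulr_ge0 ?ler0n ?sqr_ge0.
by rewrite pmulr_rge0.
Qed.

Lemma Qzero (u : 'I_N -> R) : \sum_a \sum_c u a * L a c * u c = 0 ->
  forall a c, e a c -> u a = u c.
Proof.
move=> H a c eac.
have H2 : \sum_a \sum_c (e a c)%:R * (u a - u c) ^+ 2 = 0 by rewrite -Qid H mulr0.
have nn : forall a, true -> 0 <= \sum_c (e a c)%:R * (u a - u c) ^+ 2.
  by move=> b _; apply: sumr_ge0 => c' _; rewrite mulr_ge0 ?ler0n ?sqr_ge0.
have H3 := psumr_eq0P nn H2 (i:=a) isT.
have nn2 : forall c, true -> 0 <= (e a c)%:R * (u a - u c) ^+ 2.
  by move=> c' _; rewrite mulr_ge0 ?ler0n ?sqr_ge0.
have := psumr_eq0P nn2 H3 (i:=c) isT.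
by rewrite eac mul1r => /eqP; rewrite sqrf_eq0 subr_eq0 => /eqP.
Qed.


Lemma conn_const (u : 'I_N -> R) : (forall a c, e a c -> u a = u c) ->
  forall a c, connect e a c -> u a = u c.
Proof.
move=> H a c /connectP [p pth ->]; elim: p a pth => [|y p IH] a //= /andP [eay pp].
by rewrite (H _ _ eay); exact: IH.
Qed.

Hypothesis conn : connected_graph e.

Lemma bsub i j : ((delta_mx 0 i - delta_mx 0 j : 'rV[R]_N) <= L)%MS.
Proof.
rewrite submxE; apply/eqP/matrixP => r k; rewrite ord1.
have HV := mulmx_coker L.
set V := cokermx L in HV *.
pose u : 'I_N -> R := fun a => V a k.
have Lu : forall a, \sum_c L a c * u c = 0.
  move=> a; have := congr1 (fun M : 'M[R]_N => M a k) HV; rewrite !mxE; exact: id.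
have Q0 : \sum_a \sum_c u a * L a c * u c = 0.
  apply: big1 => a _.
  transitivity (u a * \sum_c L a c * u c); last by rewrite Lu mulr0.
  by rewrite mulr_sumr; apply: eq_bigr => c _; rewrite mulrA.
have := @conn_const u (@Qzero u Q0) i j (conn i j).
move: HV Lu Q0 => _ _ _; rewrite mulmxBl -!rowE; clearbody V; rewrite !mxE /u => ->; by rewrite subrr.
Qed.


Lemma mxB00 (A B : 'M[R]_1) : (A - B) 0 0 = A 0 0 - B 0 0.
Proof. by rewrite !mxE. Qed.
Lemma mxD00 (A B : 'M[R]_1) : (A + B) 0 0 = A 0 0 + B 0 0.
Proof. by rewrite !mxE. Qed.
Lemma mxZ00 a (A : 'M[R]_1) : (a *: A) 0 0 = a * A 0 0.
Proof. by rewrite !mxE. Qed.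

Lemma quad (u : 'rV[R]_N) : (u *m L *m u^T) 0 0 = \sum_a \sum_c u 0 a * L a c * u 0 c.
Proof.
rewrite mxE; under eq_bigr => c _ do rewrite !mxE mulr_suml.
by rewrite exchange_big /=.
Qed.

Lemma dMd (M : 'M[R]_N) a c : ((delta_mx 0 a : 'rV[R]_N) *m M *m (delta_mx 0 c : 'rV[R]_N)^T) 0 0 = M a c.
Proof. by rewrite -rowE trmx_delta -colE !mxE. Qed.

Lemma dM (M : 'M[R]_(N,1)) a : ((delta_mx 0 a : 'rV[R]_N) *m M) 0 0 = M a 0.
Proof. by rewrite -rowE !mxE. Qed.

Lemma dd a c : ((delta_mx 0 a : 'rV[R]_N) *m (delta_mx 0 c : 'rV[R]_N)^T) 0 0 = (a == c)%:R.
Proof. by rewrite trmx_delta -colE !mxE eqxx /= eq_sym. Qed.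

Lemma zmod4 (V : zmodType) (a b c d : V) : a - c - (b - d) = a - b - (c - d).
Proof. by rewrite !opprB -!addrA; congr (_ + _); rewrite addrCA [RHS]addrCA (addrC (- c)). Qed.

Lemma effR i j p q : i != j ->
  2 * (p - q) - (p ^+ 2 * d i + q ^+ 2 * d j - 2 * p * q * (e i j)%:R)
  <= eff_res R e i j.
Proof.
move=> ij; rewrite /eff_res.
set b : 'rV[R]_N := delta_mx 0 i - delta_mx 0 j.
set x := b *m pinvmx L.
have xL : x *m L = b by apply: mulmxKpV; apply: bsub.
have Lx : L *m x^T = b^T by rewrite -{1}Lsym -trmx_mul xL.
clearbody x.
pose z : 'rV[R]_N := p *: delta_mx 0 i + q *: delta_mx 0 j.
have psd := Qge0 (fun a => (x - z) 0 a).
rewrite -quad in psd.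
have E : (x - z) *m L *m (x - z)^T = b *m x^T - b *m z^T - (z *m b^T - z *m L *m z^T).
  rewrite linearB /= mulmxBl !mulmxBr xL !mulmxBl -(mulmxA z L x^T) Lx.
  exact: zmod4.
rewrite E !mxB00 in psd.
have zT : z^T = p *: (delta_mx 0 i)^T + q *: (delta_mx 0 j)^T by rewrite /z linearD !linearZ.
have bx : (b *m x^T) 0 0 = x 0 i - x 0 j by rewrite mulmxBl mxB00 !dM !mxE.
have bz : (b *m z^T) 0 0 = p - q.
  rewrite zT mulmxBl !mulmxDr -!scalemxAr !mxB00 !mxD00 !mxZ00 !dd eqxx.
  by rewrite !eqxx (negbTE ij) eq_sym (negbTE ij) /= !mulr1 !mulr0; ring.
have zb : (z *m b^T) 0 0 = p - q.
  rewrite /b linearB /= mulmxBr /z !mulmxDl -!scalemxAl !mxB00 !mxD00 !mxZ00 !dd eqxx.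
  by rewrite !eqxx (negbTE ij) eq_sym (negbTE ij) /= !mulr1 !mulr0; ring.
have zLz : (z *m L *m z^T) 0 0 = p ^+ 2 * d i + q ^+ 2 * d j - 2 * p * q * (e i j)%:R.
  rewrite zT /z !mulmxDr !mulmxDl -!scalemxAr -!scalemxAl !mxD00 !mxZ00 !dMd !Lentry.
  by rewrite !eqxx (negbTE ij) eq_sym (negbTE ij) !eirr (esym j i) /= !mul1r !mul0r !subr0 !sub0r; ring.
rewrite bx bz zb zLz in psd.
lra.
Qed.


Lemma polyR (A B M : R) : 1 <= A -> 1 <= B -> 0 <= M -> M <= A -> M <= B ->
  (A + B) * (2 * A * B - A - B) * (1 + M) <= 4 * A * B * (A * B - 1).
Proof.
wlog AB : A B / A <= B.
  move=> H A1 B1 M0 MA MB; case: (lerP A B) => [ab|ba]; first exact: H.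
  have := H B A (ltW ba) B1 A1 M0 MB MA.
  have e1 : (B + A) * (2 * B * A - B - A) = (A + B) * (2 * A * B - A - B) by ring.
  have e2 : 4 * B * A * (B * A - 1) = 4 * A * B * (A * B - 1) by ring.
  by rewrite e1 e2.
move=> A1 B1 M0 MA MB.
set k := B - A.
have hB : B = A + k by rewrite /k; ring.
have k0 : 0 <= k by rewrite /k subr_ge0.
have id : 4 * A * B * (A * B - 1) - (A + B) * (2 * A * B - A - B) * (1 + A)
   = 2 * A ^+ 2 * (A - 1) * k + (2 * A ^+ 2 - A + 1) * k ^+ 2.
  by rewrite hB; ring.
have p1 : 0 <= 2 * A ^+ 2 * (A - 1) * k.
  apply: mulr_ge0 => //; apply: mulr_ge0; last by rewrite subr_ge0.
  by apply: mulr_ge0 => //; apply: sqr_ge0.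
have p2 : 0 <= (2 * A ^+ 2 - A + 1) * k ^+ 2.
  apply: mulr_ge0; last exact: sqr_ge0.
  have : A <= A ^+ 2 by rewrite expr2 ler_peMl // (le_trans ler01 A1).
  by move=> h; lra.
have s0 : 0 <= (A + B) * (2 * A * B - A - B).
  apply: mulr_ge0; first lra.
  have : 0 <= A * (B - 1) + B * (A - 1).
    by apply: addr_ge0; apply: mulr_ge0; lra.
  by move=> h; have -> : 2 * A * B - A - B = A * (B - 1) + B * (A - 1) by ring.
have : (A + B) * (2 * A * B - A - B) * (1 + M) <= (A + B) * (2 * A * B - A - B) * (1 + A).
  by apply: ler_wpM2l => //; lra.
lra.
Qed.

Lemma pairB i j (m : nat) : i != j -> (0 < deg e i)%N -> (0 < deg e j)%N ->
  (m <= deg e i)%N -> (m <= deg e j)%N ->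
  (d i + d j) * ((d i)^-1 + (d j)^-1) - (e i j)%:R * (4 / (1 + m%:R))
  <= (d i + d j) * eff_res R e i j.
Proof.
move=> ij di dj mi mj.
have Ai : 1 <= d i by rewrite ler1n.
have Bj : 1 <= d j by rewrite ler1n.
have Mi : m%:R <= d i by rewrite ler_nat.
have Mj : m%:R <= d j by rewrite ler_nat.
have M0 : 0 <= (m%:R : R) by [].
have s0 : 0 <= d i + d j by lra.
case eij: (e i j).
- rewrite mul1r.
  case ab1: (deg e i * deg e j == 1)%N.
    rewrite muln_eq1 in ab1; case/andP: ab1 => /eqP a1 /eqP b1.
    have H : 1 <= eff_res R e i j.
      have := effR i j 1 0 ij; rewrite eij a1 b1 => h; lra.
    have m1 : (m%:R : R) <= 1%:R by rewrite ler_nat -a1.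
    have h4 : 2 <= 4 / (1 + (m%:R : R)) by rewrite ler_pdivlMr; lra.
    rewrite a1 b1 invr1; lra.
  have ab2 : (2 <= deg e i * deg e j)%N by move/negbT: ab1; nia.
  set A := d i; set B := d j.
  have AB2 : 2 <= A * B by rewrite -natrM (ler_nat R 2).
  have H := effR i j ((B - 1) / (A * B - 1)) ((1 - A) / (A * B - 1)) ij.
  rewrite eij in H.
  have ht : 2 * ((B - 1) / (A * B - 1) - (1 - A) / (A * B - 1)) -
      (((B - 1) / (A * B - 1)) ^+ 2 * A + ((1 - A) / (A * B - 1)) ^+ 2 * B -
       2 * ((B - 1) / (A * B - 1)) * ((1 - A) / (A * B - 1)) * 1%:R)
      = (A + B - 2) / (A * B - 1).
    by field; apply/eqP; lra.
  rewrite ht in H.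
  have H2 := ler_wpM2l s0 H; apply: le_trans H2.
  rewrite -subr_ge0.
  have -> : (A + B) * ((A + B - 2) / (A * B - 1)) - ((A + B) * (A^-1 + B^-1) - 4 / (1 + m%:R))
     = (4 * A * B * (A * B - 1) - (A + B) * (2 * A * B - A - B) * (1 + m%:R))
       / (A * B * (A * B - 1) * (1 + m%:R)).
    by field; apply/and4P; split; apply/eqP; rewrite /A /B in AB2 *; lra.
  apply: divr_ge0; first by rewrite subr_ge0; apply: polyR.
  by rewrite !mulr_ge0 //; lra.
- rewrite mul0r subr0; apply: ler_wpM2l => //.
  have := effR i j ((d i)^-1) (- (d j)^-1) ij; rewrite eij mulr0 subr0.
  have -> : 2 * ((d i)^-1 - - (d j)^-1) - ((d i)^-1 ^+ 2 * d i + (- (d j)^-1) ^+ 2 * d j)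
     = (d i)^-1 + (d j)^-1.
    field; apply/andP; split; apply/eqP; lra.
  done.
Qed.


Lemma symsplit (F : 'I_N -> 'I_N -> R) : (forall i j, F i j = F j i) ->
  \sum_i \sum_j F i j = 2 * \sum_(i : 'I_N) \sum_(j : 'I_N | (i < j)%N) F i j + \sum_i F i i.
Proof.
move=> HF.
have h1 : forall i : 'I_N, \sum_j F i j
    = \sum_(j : 'I_N | (i < j)%N) F i j + (F i i + \sum_(j : 'I_N | (j < i)%N) F i j).
  move=> i; rewrite (bigID (fun j : 'I_N => (i < j)%N)) /=; congr (_ + _).
  rewrite (bigD1 i) /= ?ltnn //; congr (_ + _); apply: eq_bigl => j.
  rewrite -val_eqE /=; apply/idP/idP => /= h; lia.
have h2 : \sum_(i : 'I_N) \sum_(j : 'I_N | (j < i)%N) F i j = \sum_(i : 'I_N) \sum_(j : 'I_N | (i < j)%N) F i j.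
  transitivity (\sum_(i : 'I_N) \sum_(j : 'I_N) (if (j < i)%N then F i j else 0)).
    by apply: eq_bigr => i _; rewrite big_mkcond.
  rewrite exchange_big; apply: eq_bigr => i _; rewrite [RHS]big_mkcond.
  by apply: eq_bigr => j _; rewrite HF.
under eq_bigr => i _ do rewrite h1.
rewrite !big_split /= h2; ring.
Qed.

Lemma nedgesE : (nedges e)%:R = \sum_(i : 'I_N) \sum_(j : 'I_N | (i < j)%N) (e i j)%:R :> R.
Proof.
rewrite /nedges -sum1_card natr_sum big_mkcond /=.
under [RHS]eq_bigr => i _ do rewrite big_mkcond.
rewrite pair_big /=; apply: eq_bigr => -[a c] _; rewrite inE /=.
by case: (a < c)%N; case: (e a c).
Qed.

Lemma handshake : \sum_i d i = 2 * (nedges e)%:R.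
Proof.
under eq_bigr => i _ do rewrite degE.
rewrite symsplit; last by move=> a c; rewrite esym.
rewrite nedgesE [X in _ + X]big1 ?addr0 // => i _; by rewrite eirr.
Qed.

Lemma Tsum : (2 <= N)%N -> (forall i, (0 < deg e i)%N) ->
  \sum_(i : 'I_N) \sum_(j : 'I_N | (i < j)%N) (d i + d j) * ((d i)^-1 + (d j)^-1)
  = (N * (N - 2))%:R + 2 * (nedges e)%:R * \sum_j (d j)^-1.
Proof.
move=> N2 dp.
have dn : forall i, d i != 0 by move=> i; rewrite pnatr_eq0 -lt0n.
have S : \sum_(i : 'I_N) \sum_(j : 'I_N) (d i + d j) * ((d i)^-1 + (d j)^-1)
   = 2 * \sum_(i : 'I_N) \sum_(j : 'I_N | (i < j)%N) (d i + d j) * ((d i)^-1 + (d j)^-1)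
     + \sum_(i : 'I_N) (d i + d i) * ((d i)^-1 + (d i)^-1).
  by apply: (symsplit (fun i j => (d i + d j) * ((d i)^-1 + (d j)^-1))) => a c; ring.
have Td : \sum_i (d i + d i) * ((d i)^-1 + (d i)^-1) = 4 * N%:R.
  transitivity (\sum_(i : 'I_N) (4 : R)).
    by apply: eq_bigr => i _; field; apply: dn.
  by rewrite sumr_const card_ord mulr_natr.
have Tall : \sum_i \sum_j (d i + d j) * ((d i)^-1 + (d j)^-1)
   = 2 * (N%:R * N%:R) + 2 * ((\sum_i d i) * \sum_j (d j)^-1).
  transitivity (\sum_i \sum_j (2 + d i * (d j)^-1 + d j * (d i)^-1)).
    apply: eq_bigr => i _; apply: eq_bigr => j _; field.
    by rewrite dn dn.
  under eq_bigr => i _ do rewrite !big_split /=.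
  rewrite !big_split /=.
  have one : \sum_(i : 'I_N) \sum_(j : 'I_N) (1 : R) = N%:R * N%:R.
    by rewrite !sumr_const card_ord mulr_natr.
  rewrite one.
  have -> : \sum_i \sum_j d j * (d i)^-1 = \sum_i \sum_j d i * (d j)^-1.
    by rewrite exchange_big.
  have -> : (\sum_(i : 'I_N) d i) * (\sum_(j : 'I_N) (d j)^-1)
      = \sum_(i : 'I_N) \sum_(j : 'I_N) d i * (d j)^-1.
    by rewrite mulr_suml; apply: eq_bigr => i _; rewrite mulr_sumr.
  ring.
rewrite Tall Td handshake in S.
rewrite natrM natrB //.
move: S; set Y := \sum_i _; set D := \sum_j _ => S.
lra.
Qed.

Lemma deg_pos i : (1 < N)%N -> (0 < deg e i)%N.
Proof.
move=> N1.
have [j ji] : exists j : 'I_N, j != i.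
  case: (eqVneq (val i) 0%N) => h.
    by exists (Ordinal N1); rewrite -val_eqE /= h.
  by exists (Ordinal (ltnW N1)); rewrite -val_eqE /= eq_sym.
have := conn i j; case/connectP => -[|y p] /= pth lst.
  by move: ji; rewrite lst eqxx.
case/andP: pth => eiy _.
by rewrite /deg; apply/card_gt0P; exists y; rewrite inE.
Qed.

Lemma bigmin_le (F : 'I_N -> nat) (r : seq 'I_N) i : i \in r ->
  (\big[minn/N]_(k <- r) F k <= F i)%N.
Proof.
elim: r => [|x r IH] //; rewrite big_cons in_cons; case/orP => [/eqP ->|/IH h].
  exact: geq_minl.
exact: leq_trans (geq_minr _ _) h.
Qed.

Lemma mindeg_le i : (mindeg e <= deg e i)%N.
Proof. by apply: bigmin_le; rewrite mem_index_enum. Qed.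

Lemma main : (2 < N)%N ->
  add_deg_kirchhoff R e >=
    (N * (N - 2))%:R
    + 2 * (nedges e)%:R * (\sum_(j : 'I_N) ((deg e j)%:R)^-1)
    - 4 * (nedges e)%:R / (1 + (mindeg e)%:R).
Proof.
move=> N2.
have dp : forall i, (0 < deg e i)%N by move=> i; apply: deg_pos; lia.
set K := 4 / (1 + (mindeg e)%:R : R).
have H : \sum_(i : 'I_N) \sum_(j : 'I_N | (i < j)%N) ((d i + d j) * ((d i)^-1 + (d j)^-1) - (e i j)%:R * K)
   <= add_deg_kirchhoff R e.
  apply: ler_sum => i _; apply: ler_sum => j ij; rewrite natrD.
  apply: pairB => //; last by apply: mindeg_le.
    by rewrite -val_eqE /=; lia.
  by apply: mindeg_le.
have E : \sum_(i : 'I_N) \sum_(j : 'I_N | (i < j)%N) ((d i + d j) * ((d i)^-1 + (d j)^-1) - (e i j)%:R * K)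
   = (N * (N - 2))%:R + 2 * (nedges e)%:R * \sum_j (d j)^-1 - (nedges e)%:R * K.
  under eq_bigr => i _ do rewrite sumrB.
  rewrite sumrB Tsum //; last by lia.
  rewrite nedgesE mulr_suml; congr (_ - _); apply: eq_bigr => i _.
  by rewrite mulr_suml.
rewrite E in H.
move: H; rewrite /K => H; lra.
Qed.

End Pf.

Theorem theorem3 (R : realFieldType) (N : nat) (e : rel 'I_N) :
  (2 < N)%N -> simple_graph e -> connected_graph e ->
  add_deg_kirchhoff R e >=
    (N * (N - 2))%:R
    + 2 * (nedges e)%:R * (\sum_(j : 'I_N) ((deg e j)%:R)^-1)
    - 4 * (nedges e)%:R / (1 + (mindeg e)%:R).
Proof.
move=> N2 [es ei] c.
exact: main.
Qed.
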